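(* For every integer $k \ge 1$, with $\theta = 2\pi/(4k+4)$, the $\theta_{4k+4}$-graph on any finite point set in general position is a $\left(1 + \dfrac{2\sin(\theta/2)}{\cos(\theta/2) - \sin(\theta/2)}\right)$-spanner.
   Context: Cones: for $m \ge 2$, $\theta = 2\pi/m$; around each point $u$ draw $m$ rays with consecutive angular separation $\theta$, oriented so the vertical upward ray from $u$ bisects a cone $C_0^u$; cones numbered clockwise, same orientation at every point. General position: no two points on a line parallel to a cone boundary ray, no two on a line perpendicular to a cone bisector, no three collinear. The $\theta_m$-graph on $P$: for each $u\in P$ and each cone $C_i^u$ containing another point of $P$, add an edge from $u$ to the point of $C_i^u$ whose orthogonal projection onto the bisector of $C_i^u$ is closest to $u$; edges weighted by Euclidean length. A graph $H$ on $P$ is a $t$-spanner if $\delta_H(u,w)\le t|uw|$ for all $u,w\in P$. *)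

(* Defs.v *)
From Stdlib Require Import Reals Lra List.
Import ListNotations.
Open Scope R_scope.

Definition point : Type := (R * R)%type.

Definition vsub (p q : point) : point := (fst p - fst q, snd p - snd q).
Definition dot (a b : point) : R := fst a * fst b + snd a * snd b.
Definition cross (a b : point) : R := fst a * snd b - snd a * fst b.
Definition norm (a : point) : R := sqrt (dot a a).
Definition dist (p q : point) : R := norm (vsub p q).

Definition theta (m : nat) : R := 2 * PI / INR m.

(* Unit bisector of cone C_i: cone C_0 is bisected by the upward vertical
   ray (standard angle pi/2); cones are numbered clockwise, so the bisector
   of C_i has standard (counterclockwise from +x axis) angle pi/2 - i*theta. *)
Definition bisector (m i : nat) : point :=
  (cos (PI / 2 - INR i * theta m), sin (PI / 2 - INR i * theta m)).

Definition boundary_ray (m i : nat) : point :=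
  (cos (PI / 2 + theta m / 2 - INR i * theta m),
   sin (PI / 2 + theta m / 2 - INR i * theta m)).

Definition in_cone (m i : nat) (u w : point) : Prop :=
  w <> u /\ dot (vsub w u) (bisector m i) >= norm (vsub w u) * cos (theta m / 2).

Definition general_position (m : nat) (P : list point) : Prop :=
  (forall u w, In u P -> In w P -> u <> w ->
     forall j, (j < m)%nat -> cross (vsub w u) (boundary_ray m j) <> 0) /\
  (forall u w, In u P -> In w P -> u <> w ->
     forall i, (i < m)%nat -> dot (vsub w u) (bisector m i) <> 0) /\
  (forall u v w, In u P -> In v P -> In w P -> u <> v -> u <> w -> v <> w ->
     cross (vsub v u) (vsub w u) <> 0).

Definition theta_edge (m : nat) (P : list point) (u w : point) : Prop :=
  In u P /\ In w P /\
  exists i, (i < m)%nat /\ in_cone m i u w /\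
    forall w', In w' P -> in_cone m i u w' ->
      dot (vsub w u) (bisector m i) <= dot (vsub w' u) (bisector m i).

Definition theta_adj (m : nat) (P : list point) (u w : point) : Prop :=
  theta_edge m P u w \/ theta_edge m P w u.

(* A walk u = p_0, p_1, ..., p_k = w in the graph with adjacency E,
   given as u followed by the list [p_1; ...; p_k]. *)
Fixpoint is_walk (E : point -> point -> Prop) (u : point) (l : list point)
    (w : point) : Prop :=
  match l with
  | [] => u = w
  | v :: l' => E u v /\ is_walk E v l' w
  end.

Fixpoint walk_length (u : point) (l : list point) : R :=
  match l with
  | [] => 0
  | v :: l' => dist u v + walk_length v l'
  end.

(* H (on vertex set P, adjacency E, Euclidean edge weights) is a t-spanner:
   delta_H(u,w) <= t |uw| for all u, w in P, i.e. some u-w path has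
   weight at most t |uw| (the graph is finite, so delta_H is attained). *)
Definition is_spanner (P : list point) (E : point -> point -> Prop) (t : R) : Prop :=
  forall u w, In u P -> In w P ->
    exists l, is_walk E u l w /\ walk_length u l <= t * dist u w.

(* Main.v *)
Require Import Defs.
From Stdlib Require Import Reals List Lra Lia Classical.
Import ListNotations.
Open Scope R_scope.

Lemma sin_le_mono x y : -(PI/2) <= x -> x <= y -> y <= PI/2 -> sin x <= sin y.
Proof.
  intros H1 H2 H3. destruct (Rle_lt_or_eq_dec _ _ H2) as [H|H].
  - left; apply sin_increasing_1; lra.
  - subst; lra.
Qed.

Lemma sin_abs_period x n : Rabs (sin (x + INR n * PI)) = Rabs (sin x).
Proof.
  induction n as [|n IH].
  - simpl. rewrite Rmult_0_l, Rplus_0_r. reflexivity.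
  - rewrite S_INR. replace (x + (INR n + 1) * PI) with ((x + INR n * PI) + PI) by ring.
    rewrite neg_sin, Rabs_Ropp. exact IH.
Qed.

Lemma sin_abs_bound th x : 0 <= th <= PI/2 -> Rabs x <= th -> Rabs (sin x) <= sin th.
Proof.
  intros [Hth1 Hth2] Hx. pose proof PI_RGT_0.
  destruct (Rle_dec 0 x).
  - rewrite Rabs_right in Hx by lra.
    rewrite Rabs_right. 2: { apply Rle_ge, sin_ge_0; lra. }
    apply sin_le_mono; lra.
  - rewrite Rabs_left1 in Hx by lra.
    assert (Hs : 0 <= sin (-x)) by (apply sin_ge_0; lra).
    rewrite sin_neg in Hs. rewrite Rabs_left1 by lra.
    assert (sin (-x) <= sin th) by (apply sin_le_mono; lra).
    rewrite sin_neg in H0. lra.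
Qed.

Lemma sin_mid_bound th x : 0 <= th <= PI/2 -> th <= x <= PI - th -> sin th <= sin x.
Proof.
  intros [Hth1 Hth2] [Hx1 Hx2]. pose proof PI_RGT_0.
  destruct (Rle_dec x (PI/2)).
  - apply sin_le_mono; lra.
  - rewrite <- (sin_PI_x x). apply sin_le_mono; lra.
Qed.

Lemma sin_gap k chi N : let K := INR k + 1 in let th := PI / (2 * K) in
  Rabs chi <= th -> Rabs (sin chi) <= Rabs (sin (chi + INR N * (PI / K))).
Proof.
  intros K th Hc. pose proof PI_RGT_0.
  assert (HK : 1 <= K) by (unfold K; pose proof (pos_INR k); lra).
  assert (Hth : 0 < th <= PI/2).
  { unfold th. split. apply Rdiv_lt_0_compat; lra.
    apply Rmult_le_reg_r with (2*K). lra. field_simplify; try lra. nra. }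
  assert (HPK : PI / K = 2 * th) by (unfold th; field; lra).
  destruct (Nat.div_mod_eq N (S k)) as [].
  set (q := (N / S k)%nat) in *. set (r := (N mod S k)%nat) in *.
  assert (Hr : (r < S k)%nat) by (apply Nat.mod_upper_bound; lia).
  assert (HN : INR N * (PI / K) = INR r * (PI/K) + INR q * PI).
  { rewrite (Nat.div_mod_eq N (S k)). fold q r. rewrite plus_INR, mult_INR, S_INR.
    fold K. field. lra. }
  rewrite HN, <- Rplus_assoc, sin_abs_period.
  destruct r as [|r'].
  - simpl. rewrite Rmult_0_l, Rplus_0_r. lra.
  - apply Rle_trans with (sin th).
    + apply sin_abs_bound; lra.
    + assert (Hr' : INR (S r') <= INR k) by (apply le_INR; lia).
      assert (1 <= INR (S r')) by (rewrite S_INR; pose proof (pos_INR r'); lra).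
      rewrite Rabs_right.
      * apply sin_mid_bound; [lra|]. rewrite HPK.
        assert (PI = 2 * K * th) by (unfold th; field; lra).
        unfold K in *. assert (chi <= Rabs chi) by apply RRle_abs. assert (-chi <= Rabs chi) by (rewrite <- Rabs_Ropp; apply RRle_abs). split; nra.
      * apply Rle_ge. apply Rle_trans with (sin th).
        { apply sin_ge_0; lra. }
        apply sin_mid_bound; [lra|]. rewrite HPK.
        assert (PI = 2 * K * th) by (unfold th; field; lra).
        unfold K in *. assert (chi <= Rabs chi) by apply RRle_abs. assert (-chi <= Rabs chi) by (rewrite <- Rabs_Ropp; apply RRle_abs). split; nra.
Qed.

Lemma h_sq psi : (Rabs (cos psi) + Rabs (sin psi))^2 = 1 + Rabs (sin (2*psi)).
Proof.
  rewrite sin_2a, !Rabs_mult, (Rabs_right 2) by lra.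
  pose proof (sin2_cos2 psi). unfold Rsqr in H.
  pose proof (pow2_abs (cos psi)). pose proof (pow2_abs (sin psi)).
  nra.
Qed.

Lemma h_cmp k psi i j : (j < 4*k+4)%nat ->
  let K := INR k + 1 in let th := PI / (2 * K) in
  Rabs psi <= th/2 ->
  Rabs (cos psi) + Rabs (sin psi) <=
  Rabs (cos (psi + (INR i - INR j) * th)) + Rabs (sin (psi + (INR i - INR j) * th)).
Proof.
  intros Hj K th Hp. pose proof PI_RGT_0.
  assert (HK : 1 <= K) by (unfold K; pose proof (pos_INR k); lra).
  set (psi' := psi + (INR i - INR j) * th).
  assert (Hs : Rabs (sin (2*psi)) <= Rabs (sin (2*psi'))).
  { set (N := (i + (4*k+4) - j)%nat).
    assert (HN : INR N = INR i + 4 * K - INR j).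
    { unfold N. rewrite minus_INR by lia. rewrite plus_INR.
      replace (4*k+4)%nat with (4*(k+1))%nat by lia. rewrite mult_INR, plus_INR.
      unfold K. simpl. lra. }
    rewrite <- (sin_abs_period (2*psi') 4).
    replace (2 * psi' + INR 4 * PI) with (2*psi + INR N * (PI / K)).
    - apply sin_gap. fold K th. rewrite Rabs_mult, (Rabs_right 2) by lra. lra.
    - rewrite HN. unfold psi', th. simpl. field. lra. }
  assert (H2 : 1 + Rabs (sin (2*psi)) <= 1 + Rabs (sin (2*psi'))) by lra. rewrite <- !h_sq in H2.
  pose proof (Rabs_pos (cos psi)). pose proof (Rabs_pos (sin psi)).
  pose proof (Rabs_pos (cos psi')). pose proof (Rabs_pos (sin psi')).
  nra.
Qed.

Lemma polar x y A : 0 < x*x+y*y -> 0 <= A < PI ->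
  exists phi, A - 2*PI < phi <= A /\ x = sqrt (x*x+y*y) * cos phi /\ y = sqrt (x*x+y*y) * sin phi.
Proof.
  intros Hr [HA1 HA2]. pose proof PI_RGT_0.
  set (r := sqrt (x*x+y*y)).
  assert (Hr0 : 0 < r) by (apply sqrt_lt_R0; lra).
  assert (Hr2 : r * r = x*x+y*y) by (apply sqrt_sqrt; lra).
  set (u := x / r).
  assert (Hu : -1 <= u <= 1).
  { unfold u. split.
    - apply Rmult_le_reg_r with r; [lra|]. field_simplify; [|lra]. nra.
    - apply Rmult_le_reg_r with r; [lra|]. field_simplify; [|lra]. nra. }
  pose proof (acos_bound u) as Hb.
  assert (Hc : cos (acos u) = u) by (apply cos_acos; lra).
  assert (Hs : sin (acos u) = Rabs y / r).
  { rewrite sin_acos by lra.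
    replace (1 - u²) with (Rsqr (Rabs y / r)).
    - apply sqrt_Rsqr. unfold Rdiv. apply Rmult_le_pos; [apply Rabs_pos| left; apply Rinv_0_lt_compat; lra].
    - unfold Rsqr, u. assert (Hyy: Rabs y * Rabs y = y*y) by (rewrite <- Rabs_mult; apply Rabs_right; nra).
      replace (Rabs y / r * (Rabs y / r)) with (y*y/(r*r)) by (rewrite <- Hyy; field; lra).
      replace (1 - x/r*(x/r)) with ((r*r - x*x)/(r*r)) by (field; lra).
      rewrite Hr2. field. lra. }
  destruct (Rle_dec 0 y) as [Hy|Hy].
  - rewrite Rabs_right in Hs by lra.
    destruct (Rle_dec (acos u) A).
    + exists (acos u). split; [lra|]. fold r. rewrite Hc, Hs. unfold u. split; field; lra.
    + exists (acos u - 2*PI). split; [lra|]. fold r.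
      rewrite cos_minus, sin_minus, cos_2PI, sin_2PI, Hc, Hs. unfold u. split; field; lra.
  - rewrite Rabs_left in Hs by lra.
    exists (- acos u). split; [lra|]. fold r. rewrite cos_neg, sin_neg, Hc, Hs. unfold u.
    split; field; lra.
Qed.

Definition L1 (m i : nat) (d : point) : R :=
  Rabs (dot d (bisector m i)) + Rabs (cross d (bisector m i)).

Lemma INR_m k : INR (4*k+4) = 4 * (INR k + 1).
Proof. replace (4*k+4)%nat with (4*(k+1))%nat by lia. rewrite mult_INR, plus_INR. simpl. lra. Qed.

Lemma theta_eq k : theta (4*k+4) = PI / (2*(INR k + 1)).
Proof. unfold theta. rewrite INR_m. pose proof (pos_INR k). field. lra. Qed.

Lemma nat_floor M z : 0 <= z < INR M -> exists n, (n < M)%nat /\ INR n <= z < INR n + 1.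
Proof.
  induction M as [|M IH]; intros [H1 H2].
  - simpl in H2. lra.
  - destruct (Rlt_dec z (INR M)).
    + destruct IH as [n [Hn Hz]]; [lra|]. exists n. split; [lia|lra].
    + exists M. rewrite S_INR in H2. split; [lia|lra].
Qed.

Lemma cos_ge_half th p : 0 <= th <= PI -> Rabs p <= th -> cos th <= cos p.
Proof.
  intros [H1 H2] Hp.
  assert (cos p = cos (Rabs p)).
  { destruct (Rle_dec 0 p). rewrite Rabs_right by lra; auto.
    rewrite Rabs_left by lra. rewrite cos_neg. auto. }
  rewrite H. pose proof (Rabs_pos p).
  destruct (Rle_lt_or_eq_dec _ _ Hp). left; apply cos_decreasing_1; lra. rewrite e; lra.
Qed.

Lemma crux k d : 0 < dot d d ->
  exists j, (j < 4*k+4)%nat /\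
    dot d (bisector (4*k+4) j) >= norm d * cos (theta (4*k+4) / 2) /\
    forall i, (i < 4*k+4)%nat -> L1 (4*k+4) j d <= L1 (4*k+4) i d.
Proof.
  intros Hd. destruct d as [x y]. unfold dot in Hd; simpl in Hd.
  pose proof PI_RGT_0. set (K := INR k + 1).
  assert (HK : 1 <= K) by (unfold K; pose proof (pos_INR k); lra).
  set (th := PI / (2*K)).
  assert (Hth : 0 < th <= PI/2).
  { unfold th. split. apply Rdiv_lt_0_compat; lra.
    apply Rmult_le_reg_r with (2*K). lra. field_simplify; try lra. nra. }
  assert (HPI : PI = 2 * K * th) by (unfold th; field; lra).
  destruct (polar x y (PI/2 + th/2) Hd) as [phi [Hphi [Hx Hy]]]; [lra|].
  set (r := sqrt (x*x+y*y)) in *.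
  assert (Hr : 0 < r) by (apply sqrt_lt_R0; lra).
  set (om := PI/2 - phi).
  destruct (nat_floor (4*k+4) ((om + th/2)/th)) as [n [Hn [Hz1 Hz2]]].
  { rewrite INR_m. fold K. split.
    - unfold Rdiv. apply Rmult_le_pos; [unfold om; lra| left; apply Rinv_0_lt_compat; lra].
    - apply Rmult_lt_reg_r with th; [lra|]. field_simplify; [|lra]. unfold om. nra. }
  assert (Hpsi : forall i, dot (x,y) (bisector (4*k+4) i) = r * cos (phi - (PI/2 - INR i * th)) /\
       L1 (4*k+4) i (x,y) = r * (Rabs (cos (phi - (PI/2 - INR i * th))) + Rabs (sin (phi - (PI/2 - INR i * th))))).
  { intro i. unfold L1, dot, cross, bisector. cbn [fst snd]. rewrite theta_eq. fold K th.
    set (a := PI/2 - INR i * th).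
    rewrite (cos_minus phi a), (sin_minus phi a), Hx, Hy.
    split; [ring|].
    replace (r * cos phi * cos a + r * sin phi * sin a)
      with (r * (cos phi * cos a + sin phi * sin a)) by ring.
    replace (r * cos phi * sin a - r * sin phi * cos a)
      with (r * (- (sin phi * cos a - cos phi * sin a))) by ring.
    rewrite !Rabs_mult, Rabs_Ropp, (Rabs_right r) by lra. ring. }
  set (psi := phi - (PI/2 - INR n * th)).
  assert (Hps : Rabs psi <= th / 2).
  { apply Rabs_le. unfold psi.
    assert (INR n * th <= om + th/2 < INR n * th + th).
    { split.
      - apply Rmult_le_reg_r with (/th). apply Rinv_0_lt_compat; lra.
        replace (INR n * th * / th) with (INR n) by (field; lra). exact Hz1.
      - apply Rmult_lt_reg_r with (/th). apply Rinv_0_lt_compat; lra.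
        replace ((INR n * th + th) * / th) with (INR n + 1) by (field; lra). exact Hz2. }
    unfold om in H0. lra. }
  exists n. split; [exact Hn|]. split.
  - destruct (Hpsi n) as [E _]. rewrite E. fold psi.
    unfold norm, dot. cbn [fst snd]. fold r. rewrite theta_eq. fold K th.
    apply Rle_ge, Rmult_le_compat_l; [lra|]. apply cos_ge_half; lra.
  - intros i Hi. destruct (Hpsi n) as [_ E1]. destruct (Hpsi i) as [_ E2].
    rewrite E1, E2. apply Rmult_le_compat_l; [lra|]. fold psi.
    replace (phi - (PI / 2 - INR i * th)) with (psi + (INR i - INR n) * th) by (unfold psi; ring).
    apply h_cmp; auto.
Qed.

Lemma bis_unit m i : dot (bisector m i) (bisector m i) = 1.
Proof. unfold dot, bisector; cbn [fst snd]. rewrite <- (sin2_cos2 (PI / 2 - INR i * theta m)). unfold Rsqr. ring. Qed.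

Lemma dot_cross d b : dot b b = 1 -> (dot d b)^2 + (cross d b)^2 = dot d d.
Proof. destruct d, b; unfold dot, cross; cbn [fst snd]. intros H. 
  replace (dot (r,r0) (r,r0)) with (r*r+r0*r0) by reflexivity. nra. Qed.

Lemma norm_sq d : norm d * norm d = dot d d.
Proof. unfold norm. apply sqrt_sqrt. destruct d; unfold dot; cbn [fst snd]. nra. Qed.

Lemma norm_pos d : 0 <= norm d.
Proof. unfold norm. apply sqrt_pos. Qed.

Lemma dot_pos_neq u w : u <> w -> 0 < dot (vsub w u) (vsub w u).
Proof.
  destruct u as [u1 u2], w as [w1 w2]. unfold dot, vsub; cbn [fst snd]. intros H.
  destruct (Req_dec w1 u1); destruct (Req_dec w2 u2).
  - subst. exfalso; auto.
  - assert (0 < (w2-u2)*(w2-u2)). { apply Rsqr_pos_lt. lra. } nra.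
  - assert (0 < (w1-u1)*(w1-u1)). { apply Rsqr_pos_lt. lra. } nra.
  - assert (0 < (w1-u1)*(w1-u1)). { apply Rsqr_pos_lt. lra. } nra.
Qed.

Lemma norm_pos_neq u w : u <> w -> 0 < norm (vsub w u).
Proof. intros H. unfold norm. apply sqrt_lt_R0. apply dot_pos_neq; auto. Qed.

Lemma dist_eq u a : Defs.dist u a = norm (vsub a u).
Proof. destruct u, a. unfold Defs.dist, norm, vsub, dot; cbn [fst snd]. f_equal. ring. Qed.

Lemma key u a w b c s : dot b b = 1 -> c*c+s*s = 1 -> 0 <= s -> 0 < c - s ->
  dot (vsub a u) b >= norm (vsub a u) * c -> dot (vsub a u) b <= dot (vsub w u) b ->
  (c - s) * norm (vsub a u) + (Rabs (dot (vsub w a) b) + Rabs (cross (vsub w a) b))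
   <= Rabs (dot (vsub w u) b) + Rabs (cross (vsub w u) b).
Proof.
  intros Hb Hcs Hs Hcs2 Hin Hmin.
  pose proof (dot_cross (vsub a u) b Hb) as E. rewrite <- norm_sq in E.
  pose proof (norm_pos (vsub a u)) as Hr.
  assert (D1 : dot (vsub w a) b = dot (vsub w u) b - dot (vsub a u) b)
    by (destruct w, a, u, b; unfold dot, vsub; cbn [fst snd]; ring).
  assert (D2 : cross (vsub w a) b = cross (vsub w u) b - cross (vsub a u) b)
    by (destruct w, a, u, b; unfold cross, vsub; cbn [fst snd]; ring).
  rewrite D1, D2.
  set (r := norm (vsub a u)) in *. set (y := dot (vsub a u) b) in *.
  set (x := cross (vsub a u) b) in *. set (Y := dot (vsub w u) b) in *.
  set (X := cross (vsub w u) b) in *.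
  assert (Hy : r * c <= y) by lra.
  assert (Hc : 0 <= c) by lra.
  assert (Hy0 : 0 <= y) by nra.
  rewrite (Rabs_right (Y - y)) by lra. rewrite (Rabs_right Y) by lra.
  assert (Hx : Rabs x <= y - (c - s) * r).
  { assert (Z : 0 <= y - (c-s)*r) by nra.
    assert (Q : x^2 <= (y - (c-s)*r)^2).
    { assert (0 <= (y - r*c)*(2*y + 2*s*r)) by (apply Rmult_le_pos; nra). nra. }
    rewrite <- (pow2_abs x) in Q. pose proof (Rabs_pos x). nra. }
  pose proof (Rabs_triang X (-x)). rewrite Rabs_Ropp in H. unfold Rminus. lra.
Qed.

Lemma final_bound d b c s : dot b b = 1 -> c*c+s*s = 1 -> 0 <= s -> 0 <= c -> 1/2 <= c*c ->
  dot d b >= norm d * c ->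
  Rabs (dot d b) + Rabs (cross d b) <= (c + s) * norm d.
Proof.
  intros Hb Hcs Hs Hc Hc2 Hin.
  pose proof (dot_cross d b Hb) as E. rewrite <- norm_sq in E.
  pose proof (norm_pos d) as Hr.
  set (r := norm d) in *. set (Y := dot d b) in *. set (X := cross d b) in *.
  assert (HY : r * c <= Y) by lra. assert (HY0 : 0 <= Y) by nra.
  rewrite (Rabs_right Y) by lra.
  rewrite <- (pow2_abs X) in E. set (A := Rabs X) in *. assert (HA : 0 <= A) by apply Rabs_pos.
  assert (Y2 : Y*Y >= c*c*r*r). { assert (0 <= (Y - r*c)*(Y + r*c)) by (apply Rmult_le_pos; nra). nra. }
  assert (H1 : (Y*A)^2 <= (c*s*r*r)^2).
  { assert (Hsc : s*s*(r*r) <= c*c*(r*r)) by (apply Rmult_le_compat_r; nra).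
    assert (P0 : 0 <= (Y*Y - c*c*r*r)*(Y*Y - s*s*r*r)) by (apply Rmult_le_pos; lra).
    assert (AA : A*A = r*r - Y*Y) by nra.
    assert (ID : (Y*A)^2 = c*c*s*s*r*r*r*r - (Y*Y - c*c*r*r)*(Y*Y - s*s*r*r)).
    { replace ((Y*A)^2) with (Y*Y*(A*A)) by ring. rewrite AA.
      replace (r*r - Y*Y) with (r*r*(c*c+s*s) - Y*Y) by (rewrite Hcs; ring). ring. }
    rewrite ID. replace ((c*s*r*r)^2) with (c*c*s*s*r*r*r*r) by ring. lra. }
  assert (H2 : Y*A <= c*s*r*r).
  { assert (0 <= Y*A) by nra. assert (0 <= c*s*r*r) by (repeat apply Rmult_le_pos; lra). nra. }
  assert (H3 : (Y + A)^2 <= ((c+s)*r)^2) by nra.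
  assert (0 <= (c+s)*r) by (apply Rmult_le_pos; lra). nra.
Qed.

Fixpoint lmin (f : nat -> R) (n : nat) : R :=
  match n with O => f O | S n' => Rmin (f n) (lmin f n') end.

Lemma lmin_le f n i : (i <= n)%nat -> lmin f n <= f i.
Proof.
  induction n; intros Hi; simpl.
  - assert (i = 0%nat) by lia; subst; lra.
  - destruct (Nat.eq_dec i (S n)).
    + subst. apply Rmin_l.
    + eapply Rle_trans. apply Rmin_r. apply IHn; lia.
Qed.

Lemma lmin_ex f n : exists i, (i <= n)%nat /\ lmin f n = f i.
Proof.
  induction n.
  - exists 0%nat; auto.
  - destruct IHn as [i [Hi E]]. simpl. unfold Rmin. destruct Rle_dec.
    + exists (S n); auto.
    + exists i; split; [lia|auto].
Qed.

Lemma filter_le {A} (f g : A -> bool) l : (forall y, f y = true -> g y = true) ->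
  (length (filter f l) <= length (filter g l))%nat.
Proof.
  intros H. induction l as [|a l IH]; simpl; auto.
  destruct (f a) eqn:Ef; destruct (g a) eqn:Eg; simpl; try lia.
  rewrite (H a Ef) in Eg. discriminate.
Qed.

Lemma filter_lt {A} (f g : A -> bool) l x : (forall y, f y = true -> g y = true) ->
  In x l -> g x = true -> f x = false -> (length (filter f l) < length (filter g l))%nat.
Proof.
  intros H Hx Hg Hf. induction l as [|a l IH]; simpl in *; [contradiction|].
  destruct Hx as [<-|Hx].
  - rewrite Hf, Hg. simpl. pose proof (filter_le f g l H). lia.
  - specialize (IH Hx).
    destruct (f a) eqn:Ef; destruct (g a) eqn:Eg; simpl; try lia.
    rewrite (H a Ef) in Eg. discriminate.
Qed.

Lemma exists_min (Q : list point) (Pr : point -> Prop) (f : point -> R) :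
  (exists w, In w Q /\ Pr w) ->
  exists a, In a Q /\ Pr a /\ forall w', In w' Q -> Pr w' -> f a <= f w'.
Proof.
  induction Q as [|q Q IH]; intros [w [Hw Hp]].
  - destruct Hw.
  - destruct (classic (exists w, In w Q /\ Pr w)) as [Hex|Hno].
    + destruct (IH Hex) as [a [Ha [Hpa Hmin]]].
      destruct (classic (Pr q)) as [Hq|Hq].
      * destruct (Rle_dec (f q) (f a)).
        -- exists q. split; [left; auto|]. split; auto. intros w' [<-|Hw'] Hp'. lra.
           specialize (Hmin w' Hw' Hp'). lra.
        -- exists a. split; [right; auto|]. split; auto. intros w' [<-|Hw'] Hp'. lra. auto.
      * exists a. split; [right; auto|]. split; auto. intros w' [<-|Hw'] Hp'. contradiction. auto.
    + destruct Hw as [<-|Hw].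
      * exists q. split; [left; auto|]. split; auto. intros w' [<-|Hw'] Hp'. lra.
        exfalso; apply Hno; eauto.
      * exfalso; apply Hno; eauto.
Qed.

Definition V (k : nat) (u w : point) : R :=
  lmin (fun i => L1 (4*k+4) i (vsub w u)) (4*k+3).

Definition cnt (k : nat) (P : list point) (v : R) : nat :=
  length (filter (fun pq => if Rlt_dec (V k (fst pq) (snd pq)) v then true else false)
    (list_prod P P)).

Lemma cs_facts k : (1 <= k)%nat ->
  let c := cos (theta (4*k+4)/2) in let s := sin (theta (4*k+4)/2) in
  c*c+s*s = 1 /\ 0 <= s /\ 0 < c - s /\ 1/2 <= c*c /\ 0 <= c.
Proof.
  intros Hk c s. pose proof PI_RGT_0.
  assert (HK : 2 <= INR k + 1) by (apply le_INR in Hk; simpl in Hk; lra).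
  set (th := theta (4*k+4)) in *.
  assert (Hth : th = PI / (2*(INR k + 1))) by apply theta_eq.
  assert (Hth1 : 0 < th <= PI/4).
  { rewrite Hth. split. apply Rdiv_lt_0_compat; lra.
    apply Rmult_le_reg_r with (2*(INR k + 1)). lra. field_simplify; try lra. nra. }
  split. { unfold c, s. pose proof (sin2_cos2 (th/2)). unfold Rsqr in H0. lra. }
  split. { unfold s. apply sin_ge_0; lra. }
  split. { unfold c, s. rewrite <- cos_shift. apply Rlt_Rminus. apply cos_decreasing_1; lra. }
  assert (0 <= cos th) by (apply cos_ge_0; lra).
  replace th with (2 * (th/2)) in H0 by field. rewrite cos_2a_cos in H0. fold c in H0.
  split; [lra|]. unfold c. apply cos_ge_0; lra.
Qed.

Lemma V_le_L1 k u w j : (j < 4*k+4)%nat -> V k u w <= L1 (4*k+4) j (vsub w u).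
Proof. intros Hj. unfold V. apply (lmin_le (fun i => L1 (4*k+4) i (vsub w u))). lia. Qed.

Lemma L1_nonneg m i d : 0 <= L1 m i d.
Proof. unfold L1. pose proof (Rabs_pos (dot d (bisector m i))). pose proof (Rabs_pos (cross d (bisector m i))). lra. Qed.

Lemma V_nonneg k u w : 0 <= V k u w.
Proof. unfold V. destruct (lmin_ex (fun i => L1 (4*k+4) i (vsub w u)) (4*k+3)) as [i [_ E]].
  rewrite E. apply L1_nonneg. Qed.

Lemma main_ind k P : (1 <= k)%nat ->
  forall N u w, In u P -> In w P -> (cnt k P (V k u w) < N)%nat ->
  exists l, is_walk (theta_adj (4*k+4) P) u l w /\
    walk_length u l <= V k u w / (cos (theta (4*k+4)/2) - sin (theta (4*k+4)/2)).
Proof.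
  intros Hk. destruct (cs_facts k Hk) as [Hcs [Hs [Hcs2 [Hc2 Hc]]]].
  set (c := cos (theta (4*k+4)/2)) in *. set (s := sin (theta (4*k+4)/2)) in *.
  induction N as [|N IH]; intros u w Hu Hw HN; [lia|].
  destruct (classic (u = w)) as [<-|Huw].
  - exists []. split; [reflexivity|]. simpl.
    apply Rmult_le_pos; [apply V_nonneg| left; apply Rinv_0_lt_compat; lra].
  - destruct (crux k (vsub w u) (dot_pos_neq u w Huw)) as [j [Hj [Hin Hopt]]].
    set (b := bisector (4*k+4) j) in *.
    destruct (exists_min P (fun a => in_cone (4*k+4) j u a) (fun a => dot (vsub a u) b))
      as [a [Ha [Hca Hmin]]].
    { exists w. split; auto. split; auto. }
    assert (Hedge : theta_adj (4*k+4) P u a).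
    { left. unfold theta_edge. split; [exact Hu|]. split; [exact Ha|]. exists j. split; [exact Hj|]. split; [exact Hca|]. exact Hmin. }
    assert (Hwin : in_cone (4*k+4) j u w) by (split; auto).
    pose proof (Hmin w Hw Hwin) as Hdw.
    destruct Hca as [Hau Hca].
    pose proof (key u a w b c s (bis_unit _ _) Hcs Hs Hcs2 Hca Hdw) as K.
    fold (L1 (4*k+4) j (vsub w a)) in K. fold (L1 (4*k+4) j (vsub w u)) in K.
    assert (Hr : 0 < norm (vsub a u)) by (apply norm_pos_neq; auto).
    assert (HVaw : V k a w <= L1 (4*k+4) j (vsub w a)) by (apply V_le_L1; auto).
    assert (HVuw : V k u w = L1 (4*k+4) j (vsub w u)).
    { apply Rle_antisym. apply V_le_L1; auto.
      unfold V. destruct (lmin_ex (fun i => L1 (4*k+4) i (vsub w u)) (4*k+3)) as [i [Hi E]].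
      rewrite E. apply Hopt. lia. }
    assert (Hp : 0 < (c - s) * norm (vsub a u)) by (apply Rmult_lt_0_compat; lra).
    unfold L1 in HVaw, HVuw. fold b in HVaw, HVuw.
    assert (Hlt : V k a w < V k u w) by lra.
    assert (Hcnt : (cnt k P (V k a w) < cnt k P (V k u w))%nat).
    { unfold cnt. apply filter_lt with (x := (a, w)).
      - intros [p q]. simpl. destruct (Rlt_dec (V k p q) (V k a w)); try discriminate.
        destruct (Rlt_dec (V k p q) (V k u w)); auto. lra.
      - apply in_prod; auto.
      - simpl. destruct (Rlt_dec (V k a w) (V k u w)); auto.
      - simpl. destruct (Rlt_dec (V k a w) (V k a w)); auto. lra. }
    destruct (IH a w Ha Hw ltac:(lia)) as [l [Hl Hlen]].
    exists (a :: l). split; [split; auto|].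
    simpl. rewrite dist_eq.
    assert (E1 : V k a w / (c - s) <= (V k u w - (c - s) * norm (vsub a u)) / (c - s)).
    { apply Rmult_le_compat_r; [left; apply Rinv_0_lt_compat; lra|]. lra. }
    replace ((V k u w - (c - s) * norm (vsub a u)) / (c - s))
      with (V k u w / (c - s) - norm (vsub a u)) in E1 by (field; lra).
    lra.
Qed.

Theorem mainTheorem9 :
  forall (k : nat), (1 <= k)%nat ->
  forall (P : list point), NoDup P ->
    general_position (4 * k + 4) P ->
    is_spanner P (theta_adj (4 * k + 4) P)
      (1 + 2 * sin (theta (4 * k + 4) / 2) /
             (cos (theta (4 * k + 4) / 2) - sin (theta (4 * k + 4) / 2))).
Proof.
  intros k Hk P _ _ u w Hu Hw.
  destruct (main_ind k P Hk (S (cnt k P (V k u w))) u w Hu Hw (Nat.lt_succ_diag_r _)) as [l [Hl Hlen]].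
  exists l. split; auto.
  destruct (cs_facts k Hk) as [Hcs [Hs [Hcs2 [Hc2 Hc]]]].
  set (c := cos (theta (4*k+4)/2)) in *. set (s := sin (theta (4*k+4)/2)) in *.
  eapply Rle_trans; [exact Hlen|].
  replace (1 + 2 * s / (c - s)) with ((c + s) / (c - s)) by (field; lra).
  rewrite dist_eq.
  assert (HV : V k u w <= (c + s) * norm (vsub w u)).
  { destruct (classic (u = w)) as [<-|Huw].
    - assert (V k u u <= 0).
      { eapply Rle_trans. apply (V_le_L1 k u u 0%nat); lia.
        destruct u. unfold L1, vsub, dot, cross; cbn [fst snd].
        replace (r - r) with 0 by ring. replace (r0 - r0) with 0 by ring.
        rewrite !Rmult_0_l, Rplus_0_l, Rminus_0_r, Rabs_R0. lra. }
      pose proof (norm_pos (vsub u u)). nra.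
    - destruct (crux k (vsub w u) (dot_pos_neq u w Huw)) as [j [Hj [Hin _]]].
      eapply Rle_trans. apply (V_le_L1 k u w j Hj).
      apply final_bound; auto. apply bis_unit. }
  unfold Rdiv. rewrite Rmult_assoc, (Rmult_comm (/ (c-s))), <- Rmult_assoc.
  apply Rmult_le_compat_r; [left; apply Rinv_0_lt_compat; lra|]. lra.
Qed.
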